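(* Let $\Lambda:\mathbb{R}\to[0,1]$ be a decreasing function. Then for every $X\in L^0$, $$\mathrm{VaR}_{\Lambda}(X)=\sup_{x\in\mathbb{R}}\left(\mathrm{VaR}_{\Lambda(x)}(X)\wedge x\right)=\inf_{x\in\mathbb{R}}\left(\mathrm{VaR}_{\Lambda(x)}(X)\vee x\right),$$ and $$\mathrm{VaR}^+_{\Lambda}(X)=\sup_{x\in\mathbb{R}}\left(\mathrm{VaR}^+_{\Lambda(x)}(X)\wedge x\right)=\inf_{x\in\mathbb{R}}\left(\mathrm{VaR}^+_{\Lambda(x)}(X)\vee x\right).$$
   Context: $(\Omega,\mathcal F,\mathbb P)$ is an atomless probability space and $L^0$ is the set of all random variables on it. ''Decreasing'' means weakly decreasing. $x\wedge y=\min\{x,y\}$, $x\vee y=\max\{x,y\}$. For $\alpha\in[0,1]$ and $X\in L^0$: $\mathrm{VaR}_\alpha(X)=\inf\{x\in\mathbb{R}:\mathbb P(X\le x)\ge\alpha\}$ and $\mathrm{VaR}^+_\alpha(X)=\inf\{x\in\mathbb{R}:\mathbb P(X\le x)>\alpha\}$ (with $\inf\mathbb{R}=-\infty$, $\inf\emptyset=\infty$; so $\mathrm{VaR}_0=-\infty$, $\mathrm{VaR}^+_1=\infty$). For a decreasing $\Lambda:\mathbb{R}\to[0,1]$ and $X\in L^0$: $\mathrm{VaR}_\Lambda(X)=\inf\{x\in\mathbb{R}:\mathbb P(X\le x)\ge\Lambda(x)\}$ and $\mathrm{VaR}^+_\Lambda(X)=\inf\{x\in\mathbb{R}:\mathbb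 P(X\le x)>\Lambda(x)\}$. *)

(* Defs.v *)
From HB Require Import structures.
From mathcomp Require Import all_boot all_order all_algebra.
From mathcomp Require Import all_classical all_reals all_analysis.
Set Implicit Arguments. Unset Strict Implicit. Unset Printing Implicit Defensive.
Import Order.TTheory GRing.Theory Num.Theory.
Local Open Scope classical_set_scope.
Local Open Scope ring_scope.
Local Open Scope ereal_scope.

Section VaRDefs.
Context {d : measure_display} {T : measurableType d} {R : realType}.

Definition atomless (P : probability T R) : Prop :=
  forall A : set T, measurable A -> 0 < P A ->
    exists B : set T, [/\ measurable B, B `<=` A, 0 < P B & P B < P A].

Definition cdf (P : probability T R) (X : T -> R) (x : R) : \bar R :=
  P [set w | (X w <= x)%R].

(* VaR_alpha(X) = inf {x in R : P(X <= x) >= alpha}, in extended reals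
   (inf of R = -oo, inf of empty = +oo) *)
Definition VaR (P : probability T R) (a : R) (X : T -> R) : \bar R :=
  ereal_inf [set x%:E | x in [set x : R | a%:E <= cdf P X x]].

Definition VaRp (P : probability T R) (a : R) (X : T -> R) : \bar R :=
  ereal_inf [set x%:E | x in [set x : R | a%:E < cdf P X x]].

Definition VaRL (P : probability T R) (L : R -> R) (X : T -> R) : \bar R :=
  ereal_inf [set x%:E | x in [set x : R | (L x)%:E <= cdf P X x]].

Definition VaRLp (P : probability T R) (L : R -> R) (X : T -> R) : \bar R :=
  ereal_inf [set x%:E | x in [set x : R | (L x)%:E < cdf P X x]].

End VaRDefs.

(* Main.v *)
From Pilot Require Import Defs.
From HB Require Import structures.
From mathcomp Require Import all_boot all_order all_algebra.
From mathcomp Require Import all_classical all_reals all_analysis.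
Import Order.TTheory GRing.Theory Num.Theory.
Local Open Scope classical_set_scope.
Local Open Scope ring_scope.
Local Open Scope ereal_scope.

Section Gen.
Context {R : realType}.

Lemma le_from_below (m s : \bar R) :
  (forall r : R, r%:E < m -> r%:E <= s) -> m <= s.
Proof.
move=> H; case: m H => [r| |] H; last by rewrite leNye.
- case: s H => [t| |] H; last 2 first.
  + by rewrite leey.
  + have := H (r - 1)%R; rewrite lte_fin ltrBlDr ltrDl ltr01 => /(_ isT).
    by rewrite leeNy_eq.
  rewrite lee_fin leNgt; apply/negP => tr.
  have := H ((t + r) / 2)%R; rewrite lte_fin (midf_lt tr).2 lee_fin => /(_ isT).
  by rewrite leNgt (midf_lt tr).1.
- have -> : s = +oo by apply: eq_infty => r; apply: H; rewrite ltry.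
  by [].
Qed.

Variables (F : R -> \bar R) (L : R -> R) (rel : \bar R -> \bar R -> bool).
Hypothesis Fmono : forall x y, (x <= y)%R -> F x <= F y.
Hypothesis Ldec : forall x y, (x <= y)%R -> (L y <= L x)%R.
Hypothesis relr : forall a b c, rel a b -> b <= c -> rel a c.
Hypothesis rell : forall a b c, c <= a -> rel a b -> rel c b.

Let v (x : R) := ereal_inf [set y%:E | y in [set y | rel (L x)%:E (F y)]].
Let m := ereal_inf [set y%:E | y in [set y | rel (L y)%:E (F y)]].

Lemma inA_ge (x : R) : ~ rel (L x)%:E (F x) ->
  forall y, rel (L x)%:E (F y) -> (x < y)%R.
Proof.
move=> nx y hy; rewrite ltNge; apply/negP => yx.
by apply: nx; apply: relr hy _; apply: Fmono.
Qed.

Lemma gen_sup : m = ereal_sup [set mine (v x) x%:E | x in [set: R]].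
Proof.
apply/eqP; rewrite eq_le; apply/andP; split.
  apply: le_from_below => r rm; apply: ereal_sup_ubound; exists r => //.
  have nr : ~ rel (L r)%:E (F r).
    move=> hr; have : m <= r%:E by apply: ereal_inf_lbound; exists r.
    by rewrite leNgt rm.
  rewrite /mine ifF //; apply/negbTE; rewrite -leNgt.
  apply: le_ereal_inf_tmp => _ [y hy <-]; rewrite lee_fin ltW //.
  exact: (@inA_ge r nr y hy).
apply: ge_ereal_sup => _ [x _ <-].
apply: le_ereal_inf_tmp => _ [a ha <-].
have [ax|xa] := leP a x.
  rewrite ge_min; apply/orP; left; apply: ereal_inf_lbound; exists a => //.
  by apply: rell ha; rewrite lee_fin; apply: Ldec.
by rewrite ge_min lee_fin (ltW xa) orbT.
Qed.

Lemma gen_inf : m = ereal_inf [set maxe (v x) x%:E | x in [set: R]].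
Proof.
apply/eqP; rewrite eq_le; apply/andP; split.
  apply: le_ereal_inf_tmp => _ [x _ <-].
  have [hx|nx] := boolP (rel (L x)%:E (F x)).
    rewrite le_max; apply/orP; right; apply: ereal_inf_lbound; by exists x.
  rewrite le_max; apply/orP; left.
  apply: le_ereal_inf_tmp => _ [y hy <-]; apply: ereal_inf_lbound; exists y => //.
  have xy := @inA_ge x (negP nx) y hy.
  by apply: rell hy; rewrite lee_fin; apply: Ldec; apply: ltW.
apply: le_ereal_inf_tmp => _ [x hx <-]; apply: ereal_inf_lbound; exists x => //.
by apply: max_r; apply: ereal_inf_lbound; exists x.
Qed.

End Gen.

Theorem proposition1 (d : measure_display) (T : measurableType d) (R : realType)
  (P : probability T R) (HP : atomless P)
  (L : R -> R) (HL01 : forall x, (0 <= L x <= 1)%R)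
  (HLdec : forall x y : R, (x <= y)%R -> (L y <= L x)%R)
  (X : T -> R) (HX : measurable_fun setT X) :
  (VaRL P L X = ereal_sup [set mine (VaR P (L x) X) x%:E | x in [set: R]] /\
   VaRL P L X = ereal_inf [set maxe (VaR P (L x) X) x%:E | x in [set: R]]) /\
  (VaRLp P L X = ereal_sup [set mine (VaRp P (L x) X) x%:E | x in [set: R]] /\
   VaRLp P L X = ereal_inf [set maxe (VaRp P (L x) X) x%:E | x in [set: R]]).
Proof.
have mX : forall x, measurable [set w | (X w <= x)%R].
  move=> x; have := HX measurableT _ (measurable_itv `]-oo, x]).
  rewrite setTI; congr measurable; apply/seteqP; split => w /=; rewrite in_itv /=; by [].
have Fm : forall x y, (x <= y)%R -> Pilot.Defs.cdf P X x <= Pilot.Defs.cdf P X y.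
  move=> x y xy; rewrite /Pilot.Defs.cdf; apply: le_measure; rewrite ?inE.
  - exact: mX.
  - exact: mX.
  by move=> w /= /le_trans; apply.
have r1 : forall a b c : \bar R, a <= b -> b <= c -> a <= c by move=> a b c; exact: le_trans.
have r2 : forall a b c : \bar R, c <= a -> a <= b -> c <= b by move=> a b c h1 h2; exact: le_trans h1 h2.
have r3 : forall a b c : \bar R, a < b -> b <= c -> a < c by move=> a b c; exact: lt_le_trans.
have r4 : forall a b c : \bar R, c <= a -> a < b -> c < b by move=> a b c h1 h2; exact: le_lt_trans h1 h2.
split; split.
- exact: (@gen_sup R _ L _ Fm HLdec r1 r2).
- exact: (@gen_inf R _ L _ Fm HLdec r1 r2).
- exact: (@gen_sup R _ L _ Fm HLdec r3 r4).
- exact: (@gen_inf R _ L _ Fm HLdec r3 r4).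
Qed.
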